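(* For every $n\ge 1$, $\chi_{lc}(K_n)=n$.
   Context: Graphs are finite, loopless, with symmetric edge sets; $K_c$ is the complete graph on $c$ vertices; write $v\sim w$ when $(v,w)$ is an edge. For graphs $G,H$, the locally commuting algebra $\mathcal A_{lc}(G,H)$ is the unital complex algebra generated by elements $e_{v,x}$ ($v\in V(G)$, $x\in V(H)$) subject to the relations: $\sum_{x\in V(H)}e_{v,x}=1$ for all $v$; $e_{v,x}^2=e_{v,x}$; $e_{v,x}e_{v,y}=0$ for $x\neq y$; $e_{v,x}e_{w,y}=0$ whenever $v\sim w$ and $x\not\sim y$ (in particular when $x=y$); and $e_{v,x}e_{w,y}=e_{w,y}e_{v,x}$ whenever $v\sim w$. (Equivalently it is the quotient of the group $*$-algebra of the free product of $|V(G)|$ cyclic groups of order $|V(H)|$ by the ideal generated by the products of spectral projections forbidden by the graph homomorphism game together with the commutators $[e_{v,x},e_{w,y}]$ for $v\sim w$.) Define $\chi_{lc}(G)=\min\{c:\mathcal A_{lc}(G,K_c)\neq 0\}$. *)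

(* Defs.v *)
From HB Require Import structures.
From mathcomp Require Import all_boot all_algebra.
From mathcomp Require Import complex Rstruct.
Set Implicit Arguments. Unset Strict Implicit. Unset Printing Implicit Defensive.
Import GRing.Theory.
Local Open Scope ring_scope.

Definition Cplx : numClosedFieldType := complex Rdefinitions.R.

Definition is_graph (T : finType) (adj : rel T) : Prop :=
  irreflexive adj /\ symmetric adj.

Definition Kadj (c : nat) : rel 'I_c := fun i j => i != j.

Definition lc_relations (TG : finType) (adjG : rel TG)
    (TH : finType) (adjH : rel TH) (B : algType Cplx) (e : TG -> TH -> B) : Prop :=
  [/\ (forall v, \sum_(x : TH) e v x = 1),
      (forall v x, e v x * e v x = e v x),
      (forall v x y, x != y -> e v x * e v y = 0),
      (forall v w x y, adjG v w -> ~~ adjH x y -> e v x * e w y = 0)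
    & (forall v w x y, adjG v w -> e v x * e w y = e w y * e v x)].

(* A_lc(G,H) <> 0.  A_lc(G,H) is the universal unital complex algebra generated
   by the e_{v,x} subject to the relations above; it is nonzero iff there is
   some unital associative complex algebra B with 1 <> 0 containing a family
   satisfying these relations (take B = A_lc(G,H) itself for one direction, and
   the universal morphism A_lc(G,H) -> B for the other). *)
Definition Alc_nonzero (TG : finType) (adjG : rel TG)
    (TH : finType) (adjH : rel TH) : Prop :=
  exists (B : algType Cplx) (e : TG -> TH -> B),
    (1 : B) != 0 /\ lc_relations adjG adjH e.

Definition chi_lc_eq (TG : finType) (adjG : rel TG) (c : nat) : Prop :=
  Alc_nonzero adjG (@Kadj c) /\
  (forall c', (c' < c)%N -> ~ Alc_nonzero adjG (@Kadj c')).

(* Main.v *)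
Require Import Defs.
From mathcomp Require Import all_boot all_algebra.
Import GRing.Theory.
Local Open Scope ring_scope.

Section Neg.
Variables (n c : nat) (B : algType Cplx) (e : 'I_n -> 'I_c -> B).
Hypothesis Hz : forall v w x, v != w -> e v x * e w x = 0.
Hypothesis Hc : forall v w x y, v != w -> e v x * e w y = e w y * e v x.

Definition G (vs : seq 'I_n) (A : {set 'I_c}) : B :=
  \prod_(v <- vs) (\sum_(x in A) e v x).

Lemma shrink v x (vs : seq 'I_n) A : v \notin vs ->
  e v x * G vs A = e v x * G vs (A :\ x).
Proof.
elim: vs => [|w vs IH] /=; first by rewrite /G !big_nil.
rewrite in_cons negb_or => /andP[vw vvs].
rewrite /G !big_cons -/(G vs A) -/(G vs (A :\ x)).
have E : e v x * (\sum_(y in A) e w y) = e v x * (\sum_(y in A :\ x) e w y).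
  case: (boolP (x \in A)) => xA.
    rewrite (bigD1 x) //= mulrDr Hz ?mul0r ?add0r //.
    by congr (_ * _); apply: eq_bigl => y; rewrite !inE andbC.
  by congr (_ * _); apply: eq_bigl => y; rewrite !inE; case: eqP => // ->; rewrite (negbTE xA).
have Cm : e v x * (\sum_(y in A :\ x) e w y) = (\sum_(y in A :\ x) e w y) * e v x.
  by rewrite mulr_sumr mulr_suml; apply: eq_bigr => y _; rewrite Hc.
by rewrite !mulrA E Cm -!mulrA IH.
Qed.

Lemma Gzero (vs : seq 'I_n) : uniq vs -> forall A : {set 'I_c}, (#|A| < size vs)%N -> G vs A = 0.
Proof.
elim: vs => [|v vs IH] //= /andP[vvs uvs] A hA.
rewrite /G big_cons -/(G vs A) mulr_suml big1 // => x xA.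
rewrite shrink // IH ?mulr0 //.
by move: hA; rewrite (cardsD1 x A) xA add1n ltnS.
Qed.

End Neg.

Theorem mainTheorem2 (n : nat) : (1 <= n)%N -> chi_lc_eq (@Kadj n) n.
Proof.
move=> _; split.
  exists (Cplx^o), (fun v x : 'I_n => ((v == x)%:R : Cplx^o)); split; first exact: oner_neq0.
  split.
  - move=> v; rewrite (bigD1 v) // eqxx.
    rewrite (eq_bigr (fun _ => 0)) ?big1_eq; first exact: addr0.
    by move=> y /negbTE; rewrite eq_sym => ->.
  - by move=> v x; case: (v == x); rewrite ?mulr1 ?mulr0.
  - move=> v x y xy; case hvx: (v == x); case hvy: (v == y); rewrite ?mul0r ?mulr0 //.
    by move: xy; rewrite -(eqP hvx) -(eqP hvy) eqxx.
  - move=> v w x y; rewrite /Kadj => vw; rewrite negbK => /eqP <-.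
    case hvx: (v == x); case hwx: (w == x); rewrite ?mul0r ?mulr0 //.
    by move: vw; rewrite (eqP hvx) (eqP hwx) eqxx.
  - by move=> v w x y _; rewrite mulrC.
move=> c' lt [B [e [neq [Hs _ _ Hz Hc]]]].
have Hz' : forall (v w : 'I_n) (x : 'I_c'), v != w -> e v x * e w x = 0.
  by move=> v w x vw; apply: Hz => //; rewrite /Kadj eqxx.
have Hc' : forall (v w : 'I_n) (x y : 'I_c'), v != w -> e v x * e w y = e w y * e v x.
  by move=> v w x y vw; apply: Hc.
have hc : (#|[set: 'I_c']| < size (enum 'I_n))%N.
  by rewrite cardsT card_ord size_enum_ord.
have E := @Gzero n c' B e Hz' Hc' (enum 'I_n) (enum_uniq _) _ hc.
have E1 : G n c' B e (enum 'I_n) [set: 'I_c'] = 1.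
  rewrite /G big1 // => v _.
  by rewrite -(Hs v); apply: eq_bigl => x; rewrite inE.
move: neq; rewrite -E1 => /eqP H; exact (H E).
Qed.
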